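(* Let $\mathbf H\in\mathbb R^{N\times L}$ and $\mathbf G=[\mathbf g_1,\dots,\mathbf g_M]\in\mathbb R^{N\times M}$ with $\operatorname{rank}([\mathbf H\ \mathbf G])=L+M$. Perform the recursive differencing procedure described in the context, with arbitrary admissible choices of reference indices $j_1,\dots,j_M$ (assuming that at every step $k$ the vector $\mathbf g_k^{(k-1)}$ has at least two nonzero entries), and let $\boldsymbol\Gamma=\boldsymbol\Gamma^{(M)}\cdots\boldsymbol\Gamma^{(1)}$. Then $\boldsymbol\Gamma\in\mathbb R^{(N-M)\times N}$ has full row rank, $\boldsymbol\Gamma\mathbf G=\mathbf 0$, and with $\mathbf P=(\boldsymbol\Gamma\boldsymbol\Gamma^T)^{-1/2}\boldsymbol\Gamma$ the differential estimate $$\hat{\mathbf x}_d=(\mathbf H^T\mathbf P^T\mathbf P\mathbf H)^{-1}\mathbf H^T\mathbf P^T\mathbf P\mathbf y$$ is well defined and equals $\hat{\mathbf x}_{\mathrm{jls}}=(\mathbf H^T\mathbf P_{\mathbf G}^\perp\mathbf H)^{-1}\mathbf H^T\mathbf P_{\mathbf G}^\perp\mathbf y$ for every $\mathbf y\in\mathbb R^N$. In particular $\hat{\mathbf x}_d$ does not depend on the choice of the reference indices $j_1,\dots,j_M$.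
   Context: Recursive differencing procedure: set $\mathbf g_i^{(0)}=\mathbf g_i$ for $i=1,\dots,M$. For $k=1,\dots,M$, let $\mathbf v=\mathbf g_k^{(k-1)}\in\mathbb R^{N-k+1}$, let $Z=\{i:v_i=0\}$ and $S=\{i:v_i\neq0\}$, and choose a reference index $j=j_k\in S$. Define $\boldsymbol\Gamma^{(k)}\in\mathbb R^{(N-k)\times(N-k+1)}$ as the matrix whose rows (listed in increasing order of $i$) are $\mathbf e_i^T$ for $i\in Z$ and $\mathbf e_i^T/v_i-\mathbf e_j^T/v_j$ for $i\in S\setminus\{j\}$, where $\mathbf e_i$ are standard basis vectors of $\mathbb R^{N-k+1}$; that is, the $k$-th step maps a vector $\mathbf d$ to the vector keeping the entries $d_i$, $i\in Z$, and replacing the others by $d_i/v_i-d_j/v_j$, $i\in S\setminus\{j\}$. Then set $\mathbf g_i^{(k)}=\boldsymbol\Gamma^{(k)}\mathbf g_i^{(k-1)}$ for all $i$. $\mathbf P_{\mathbf G}^\perp=\mathbf I_N-\mathbf G(\mathbf G^T\mathbf G)^{-1}\mathbf G^T$; $(\cdot)^{-1/2}$ is the inverse symmetric positive definite square root. *)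

(* Defs.v *)
From HB Require Import structures.
From mathcomp Require Import all_boot all_order all_algebra.
Set Implicit Arguments. Unset Strict Implicit. Unset Printing Implicit Defensive.
Import Order.TTheory GRing.Theory Num.Theory.
Local Open Scope ring_scope.

Section Defs.
Variable R : realFieldType.

(* The rows are indexed by r : 'I_n, row r corresponds to the index
   i = lift j r, i.e. the indices i <> j listed in increasing order. *)
Definition stepGamma (n : nat) (v : 'cV[R]_n.+1) (j : 'I_n.+1) : 'M[R]_(n, n.+1) :=
  \matrix_(r < n, c < n.+1)
    (if v (lift j r) 0 == 0 then (c == lift j r)%:R
     else (c == lift j r)%:R / v (lift j r) 0 - (c == j)%:R / v j 0).

(* The whole procedure, for N = M + n.  js k is the (0-based) reference
   index chosen at step k+1.  Returns Gamma = Gamma^(M) ... Gamma^(1). *)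
Fixpoint diffGamma (M n : nat) {struct M} :
    'M[R]_(M + n, M) -> (nat -> nat) -> 'M[R]_(n, M + n) :=
  match M as m return 'M[R]_(m + n, m) -> (nat -> nat) -> 'M[R]_(n, m + n) with
  | 0 => fun _ _ => 1%:M
  | M'.+1 => fun G js =>
      let v : 'cV[R]_(M' + n).+1 := @lsubmx R (M'.+1 + n) 1 M' G in
      let G1 := stepGamma v (inord (js 0%N)) in
      diffGamma (G1 *m @rsubmx R (M'.+1 + n) 1 M' G) (fun k => js k.+1) *m G1
  end.

Fixpoint admissible (M n : nat) {struct M} :
    'M[R]_(M + n, M) -> (nat -> nat) -> Prop :=
  match M as m return 'M[R]_(m + n, m) -> (nat -> nat) -> Prop with
  | 0 => fun _ _ => True
  | M'.+1 => fun G js =>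
      let v : 'cV[R]_(M' + n).+1 := @lsubmx R (M'.+1 + n) 1 M' G in
      let G1 := stepGamma v (inord (js 0%N)) in
      [/\ (js 0%N < (M' + n).+1)%N,
          v (inord (js 0%N)) 0 != 0,
          (1 < #|[set i | v i ord0 != 0%R]|)%N &
          admissible (G1 *m @rsubmx R (M'.+1 + n) 1 M' G) (fun k => js k.+1)]
  end.

Definition posdef (n : nat) (A : 'M[R]_n) : Prop :=
  A^T = A /\ forall x : 'cV[R]_n, x != 0 -> 0 < (x^T *m A *m x) 0 0.

Definition is_invsqrt (n : nat) (S A : 'M[R]_n) : Prop :=
  posdef S /\ S *m S = invmx A.

Definition PGperp (N M : nat) (G : 'M[R]_(N, M)) : 'M[R]_N :=
  1%:M - G *m invmx (G^T *m G) *m G^T.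

End Defs.

(* Main.v *)
Require Import Defs.
From HB Require Import structures.
From mathcomp Require Import all_boot all_order all_algebra.
Import Order.TTheory GRing.Theory Num.Theory.
Set Implicit Arguments. Unset Strict Implicit.
Local Open Scope ring_scope.

Section Gen.
Variable R : realFieldType.



Lemma sqrow0 p (w : 'rV[R]_p) : w *m w^T = 0 -> w = 0.
Proof.
move=> h; apply/rowP => i; rewrite mxE.
have : (w *m w^T) 0 0 = 0 by rewrite h mxE.
rewrite mxE => hs.
have h2 := @psumr_eq0P R _ predT (fun j => w 0 j * w^T j 0) _ hs i isT.
  rewrite /= mxE -expr2 in h2.
  by apply/eqP; rewrite -sqrf_eq0; apply/eqP; apply: h2 => j _; rewrite mxE -expr2 sqr_ge0.
Qed.

Lemma rfreeP m p (A : 'M[R]_(m, p)) :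
  (forall u : 'rV_m, u *m A = 0 -> u = 0) -> row_free A.
Proof.
move=> h; rewrite -kermx_eq0; apply/eqP/row_matrixP => i.
rewrite row0; apply: h; by rewrite -row_mul mulmx_ker row0.
Qed.

Lemma rfreeE m p (A : 'M[R]_(m, p)) (u : 'rV_m) : row_free A -> u *m A = 0 -> u = 0.
Proof. by move=> fA /eqP; rewrite mulmx_free_eq0 // => /eqP. Qed.

Lemma unit_AAT m p (A : 'M[R]_(m, p)) : row_free A -> A *m A^T \in unitmx.
Proof.
move=> fA; rewrite -row_free_unit; apply: rfreeP => u hu.
apply: (rfreeE fA); apply: sqrow0.
by rewrite trmx_mul mulmxA -(mulmxA u) hu mul0mx.
Qed.
End Gen.

Section Step.
Variable R : realFieldType.

Lemma step_free n (v : 'cV[R]_n.+1) j : row_free (stepGamma v j).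
Proof.
apply: rfreeP => u hu; apply/rowP => r0.
have := congr1 (fun X : 'rV[R]_n.+1 => X 0 (lift j r0)) hu.
rewrite !mxE (bigD1 r0) //= big1 => [|r hr]; last first.
  rewrite !mxE (inj_eq (@lift_inj _ j)) [r0 == r]eq_sym (negbTE hr) [lift j r0 == j]eq_sym (negbTE (neq_lift _ _)).
  by case: ifP => _; rewrite ?mul0r ?subr0 ?mulr0.
rewrite !mxE eqxx [lift j r0 == j]eq_sym (negbTE (neq_lift _ _)) mul0r subr0 mul1r addr0.
case: ifP => h0; first by rewrite mulr1.
by move/eqP; rewrite mulf_eq0 invr_eq0 h0 orbF => /eqP.
Qed.

Lemma step_kill n (v : 'cV[R]_n.+1) j : v j 0 != 0 -> stepGamma v j *m v = 0.
Proof.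
move=> vj; apply/colP => r; rewrite !mxE.
have [h0|h0] := eqVneq (v (lift j r) 0) 0.
  rewrite (bigD1 (lift j r)) //= big1 => [|c hc]; last by rewrite !mxE h0 eqxx (negbTE hc) mul0r.
  by rewrite !mxE h0 eqxx mulr0 addr0.
rewrite (bigD1 (lift j r)) //= (bigD1 j) ?(neq_lift _ _) //= big1 => [|c /andP[hc1 hc2]]; last first.
  by rewrite !mxE (negbTE h0) (negbTE hc1) (negbTE hc2) !mul0r subr0 mul0r.
rewrite !mxE (negbTE h0) eqxx [lift j r == j]eq_sym (negbTE (neq_lift _ _)).
by rewrite /= !mul0r subr0 sub0r addr0 eqxx !div1r mulVf // mulNr mulVf // subrr.
Qed.
End Step.

Section Diff.
Variable R : realFieldType.
Lemma diff_props M n (G : 'M[R]_(M + n, M)) js :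
  admissible G js -> row_free (diffGamma G js) /\ diffGamma G js *m G = 0.
Proof.
elim: M G js => [|M IH] G js /=.
  by move=> _; split; [rewrite /row_free mxrank1 | rewrite mul1mx; apply: thinmx0].
move=> [_ vj _ adm]; have [f0 k0] := IH _ _ adm; split.
  apply: rfreeP => u hu; apply: (rfreeE f0); apply: (rfreeE (step_free (@lsubmx _ (M.+1 + n) 1 M G) (inord (js 0%N)))).
  by rewrite -mulmxA.
by rewrite -[X in _ *m X = 0](@hsubmxK _ _ 1 M G) (@mul_mx_row _ _ _ 1 M) -!mulmxA step_kill // mulmx0 k0 row_mx0.
Qed.
End Diff.

Section Proj.
Variable R : realFieldType.

Lemma row_mx_eq0P m n1 n2 (A : 'M[R]_(m, n1)) (B : 'M[R]_(m, n2)) :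
  row_mx A B = 0 -> A = 0 /\ B = 0.
Proof. by move/eqP; rewrite row_mx_eq0 => /andP[/eqP -> /eqP ->]. Qed.

Lemma proj_sum n M (Gam : 'M[R]_(n, M + n)) (G : 'M[R]_(M + n, M)) :
  row_free Gam -> row_free G^T -> Gam *m G = 0 ->
  Gam^T *m invmx (Gam *m Gam^T) *m Gam = PGperp G.
Proof.
move=> fGam fGt kG.
have uGam := unit_AAT fGam.
have uG : G^T *m G \in unitmx by have := unit_AAT fGt; rewrite trmxK.
set X := col_mx Gam G^T.
have fX : row_free X.
  apply: rfreeP => u hu.
  rewrite -(hsubmxK u) in hu *.
  move: hu; rewrite /X mul_row_col => hu.
  have hb : rsubmx u = 0.
    apply: rfreeE (_ : row_free (G^T *m G)) _; first by rewrite row_free_unit.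
    by have := congr1 (mulmx^~ G) hu; rewrite /= mulmxDl -!mulmxA kG mulmx0 add0r mul0mx.
  rewrite hb mul0mx addr0 in hu.
  by rewrite hb (rfreeE fGam hu) row_mx0.
  have fullX : row_full X by move: fX; rewrite /row_full /row_free => /eqP ->; rewrite addnC.
set Q1 := Gam^T *m invmx (Gam *m Gam^T) *m Gam.
set Q2 := G *m invmx (G^T *m G) *m G^T.
have [D hD] : exists D, 1%:M - Q1 - Q2 = D *m X by apply/submxP; apply: submx_full.
have hE : (1%:M - Q1 - Q2) *m X^T = 0.
  rewrite /X tr_col_mx trmxK mul_mx_row !mulmxBl !mul1mx.
  have h1 : Q1 *m Gam^T = Gam^T by rewrite /Q1 -!mulmxA mulVmx // mulmx1.
  have h2 : Q2 *m Gam^T = 0 by rewrite /Q2 -mulmxA -trmx_mul kG trmx0 mulmx0.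
  have h3 : Q1 *m G = 0 by rewrite /Q1 -mulmxA kG mulmx0.
  have h4 : Q2 *m G = G by rewrite /Q2 -!mulmxA mulVmx // mulmx1.
  by rewrite h1 h2 h3 h4 subrr subr0 subr0 subrr row_mx0.
have D0 : D = 0.
  apply/eqP; rewrite -(mulmx_free_eq0 _ (_ : row_free (X *m X^T))).
    by rewrite mulmxA -hD hE.
  by rewrite row_free_unit unit_AAT.
rewrite D0 mul0mx in hD.
rewrite /PGperp -/Q2.
by apply/eqP; rewrite eq_sym -subr_eq0 addrAC hD.
Qed.
End Proj.

Unset Implicit Arguments. Set Strict Implicit.
Theorem mainTheorem4 (R : realFieldType) (L M n : nat)
    (H : 'M[R]_(M + n, L)) (G : 'M[R]_(M + n, M)) (js : nat -> nat) :
  \rank (row_mx H G) = (L + M)%N ->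
  admissible G js ->
  let Gam := diffGamma G js in
  [/\ row_free Gam,
      Gam *m G = 0 &
      forall S : 'M[R]_n, is_invsqrt S (Gam *m Gam^T) ->
        let P := S *m Gam in
        [/\ H^T *m P^T *m P *m H \in unitmx,
            H^T *m PGperp G *m H \in unitmx &
            forall y : 'cV[R]_(M + n),
              invmx (H^T *m P^T *m P *m H) *m H^T *m P^T *m P *m y
              = invmx (H^T *m PGperp G *m H) *m H^T *m PGperp G *m y]].
Proof.
move=> hr adm Gam.
have [fG kG] := diff_props adm.
have fX : row_free (col_mx H^T G^T) by rewrite /row_free -tr_row_mx mxrank_tr hr.
have fGt : row_free G^T.
  apply: rfreeP => u hu.
  have := @rfreeE _ _ _ _ (row_mx 0 u) fX.
  rewrite mul_row_col mul0mx add0r hu => /(_ erefl) /row_mx_eq0P [].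
  by [].
split => // S [[hSt _] hSS] P.
have hPP : P^T *m P = PGperp G.
  rewrite -(proj_sum fG fGt kG) /P trmx_mul hSt mulmxA -(mulmxA _ S S) hSS.
  by [].
have e1 p (A : 'M[R]_(p, M + n)) : A *m P^T *m P = A *m PGperp G.
  by rewrite -mulmxA hPP.
clearbody P.
have uK : H^T *m PGperp G *m H \in unitmx.
  rewrite -row_free_unit; apply: rfreeP => u hu.
  have hw : u *m H^T *m P^T = 0.
    apply: sqrow0.
    have hu2 : u *m H^T *m PGperp G *m H = 0 by rewrite !mulmxA in hu.
    by rewrite trmx_mul trmxK mulmxA e1 trmx_mul trmxK mulmxA hu2 mul0mx.
  have hq : u *m H^T *m PGperp G = 0 by rewrite -e1 hw mul0mx.
  set B := invmx (G^T *m G).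
  have := @rfreeE _ _ _ _ (row_mx u (- (u *m H^T *m G *m B))) fX.
  rewrite mul_row_col mulNmx.
  move: hq; rewrite /PGperp mulmxBr mulmx1 -/B !mulmxA => ->.
  by move=> /(_ erefl) /row_mx_eq0P [].
rewrite !e1; split => //.
Qed.
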